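(* Let $G$ be a DAG and let $S\subseteq E(G)$ be a matching of reversible edges of $G$ (a set of reversible edges no two of which share an endpoint). Then $|\mathrm{MEC}(G)|\ge 2^{|S|}$.
   Context: An edge $v\to w$ of a DAG $G$ is reversible if replacing it by $w\to v$ yields a DAG that is Markov equivalent to $G$. Markov equivalence: two DAGs on the same vertex set are Markov equivalent if they have the same d-separation statements, where for vertices $a\neq b$ and $Z\subseteq V\setminus\{a,b\}$, $a,b$ are d-connected given $Z$ if there is a path (sequence of vertices, consecutive ones joined by an edge of either direction, endpoints $a\ne b$) on which every internal non-collider is not in $Z$ and every collider (internal vertex with both adjacent path-edges pointing into it) is in $Z$ or has a descendant (itself or a vertex reachable by a directed path) in $Z$; otherwise d-separated. $\mathrm{MEC}(G)$ is the set of DAGs Markov equivalent to $G$. *)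

(* Defs.v *)
From mathcomp Require Import all_boot.
From mathcomp Require Import boolp.

Set Implicit Arguments.
Unset Strict Implicit.
Unset Printing Implicit Defensive.

Section DAGs.
Variable V : finType.

(* A directed graph on the vertex set V is a set of ordered pairs;
   (v, w) \in G means the edge v -> w. *)
Definition edge_rel (G : {set V * V}) : rel V := fun x y => (x, y) \in G.

(* DAG: no directed cycle (this also excludes self-loops). *)
Definition is_dag (G : {set V * V}) : Prop :=
  forall x y, (x, y) \in G -> ~~ connect (edge_rel G) y x.

Definition descendant (G : {set V * V}) (x d : V) : bool :=
  connect (edge_rel G) x d.

Definition adjacent (G : {set V * V}) : rel V :=
  fun x y => ((x, y) \in G) || ((y, x) \in G).

Definition collider (G : {set V * V}) (u x w : V) : bool :=
  ((u, x) \in G) && ((w, x) \in G).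

Definition d_connected (G : {set V * V}) (a b : V) (Z : {set V}) : Prop :=
  a != b /\
  exists mid : seq V,
    let s := a :: rcons mid b in
    path (adjacent G) a (rcons mid b) /\
    forall i, 0 < i -> i < (size s).-1 ->
      let u := nth a s i.-1 in
      let x := nth a s i in
      let w := nth a s i.+1 in
      if collider G u x w then (exists2 z, z \in Z & descendant G x z)
      else x \notin Z.

Definition d_separated (G : {set V * V}) (a b : V) (Z : {set V}) : Prop :=
  ~ d_connected G a b Z.

Definition markov_equiv (G H : {set V * V}) : Prop :=
  forall (a b : V) (Z : {set V}), a != b -> a \notin Z -> b \notin Z ->
    (d_separated G a b Z <-> d_separated H a b Z).

Definition MEC (G : {set V * V}) : {set {set V * V}} :=
  [set H : {set V * V} | `[< is_dag H /\ markov_equiv G H >]].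

Definition reverse_edge (G : {set V * V}) (e : V * V) : {set V * V} :=
  (G :\ e) :|: [set (e.2, e.1)].

Definition reversible (G : {set V * V}) (e : V * V) : Prop :=
  e \in G /\ is_dag (reverse_edge G e) /\ markov_equiv G (reverse_edge G e).

Definition is_matching (S : {set V * V}) : Prop :=
  forall e f, e \in S -> f \in S -> e != f ->
    [/\ e.1 != f.1, e.1 != f.2, e.2 != f.1 & e.2 != f.2].

End DAGs.

(* Main.v *)
Require Import Defs.
From mathcomp Require Import all_boot.
From mathcomp Require Import boolp.

Set Implicit Arguments.
Unset Strict Implicit.
Unset Printing Implicit Defensive.


Section Gen.
Variable V : finType.
Implicit Types (G H : {set V * V}) (Z : {set V}) (a b x y z u : V).

Lemma dag_noloop G x : is_dag G -> (x, x) \notin G.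
Proof. by move=> dG; apply/negP => /dG; rewrite connect0. Qed.

Lemma dag_no2 G x y : is_dag G -> (x, y) \in G -> (y, x) \notin G.
Proof. by move=> dG xy; apply/negP => yx; move: (dG _ _ xy); rewrite connect1. Qed.

Lemma connect_first (e : rel V) x y : connect e x y -> x != y ->
  exists2 c, e x c & connect e c y.
Proof.
move=> /connectP [[|c p]] /=; first by move=> _ ->; rewrite eqxx.
move=> /andP [xc pc] -> _; exists c => //; apply/connectP; by exists p.
Qed.

Lemma connect_last (e : rel V) x y : connect e x y -> x != y ->
  exists2 c, connect e x c & e c y.
Proof.
move=> /connectP [p]; case/lastP: p => [|p c] /=; first by move=> _ ->; rewrite eqxx.
rewrite rcons_path last_rcons => /andP [pp ec] -> _.
exists (last x p) => //; apply/connectP; by exists p.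
Qed.

Lemma dag_cyc G x y : is_dag G -> connect (edge_rel G) x y -> connect (edge_rel G) y x -> x = y.
Proof.
move=> dG xy yx; apply/eqP; apply/negPn/negP => nxy.
case: (connect_first xy nxy) => c xc cy.
by move: (dG _ _ xc); rewrite (connect_trans cy yx).
Qed.

Inductive zr G Z a : V -> bool -> Prop :=
| zr0 y : adjacent G a y -> zr G Z a y ((a, y) \in G)
| zrS x h y : zr G Z a x h -> adjacent G x y ->
    (h && ((y, x) \in G)) = (x \in Z) -> zr G Z a y ((x, y) \in G).

Definition cnd G Z u x w : Prop :=
  if collider G u x w then (exists2 z, z \in Z & descendant G x z) else x \notin Z.

Lemma nth_rcons_lt (T : Type) (x0 : T) (s : seq T) (y0 : T) j : j < size s -> nth x0 (rcons s y0) j = nth x0 s j.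
Proof. by move=> h; rewrite nth_rcons h. Qed.

Lemma nth_rcons_sz (T : Type) (x0 : T) (s : seq T) (y0 : T) : nth x0 (rcons s y0) (size s) = y0.
Proof. by rewrite nth_rcons ltnn eqxx. Qed.

Lemma nth_walk_last (T : Type) (a0 : T) (mid : seq T) (x0 : T) : nth a0 (a0 :: rcons mid x0) (size mid) = last a0 mid.
Proof.
have -> : a0 :: rcons mid x0 = rcons (a0 :: mid) x0 by [].
by rewrite nth_rcons_lt // -[size mid]/((size (a0 :: mid)).-1) nth_last.
Qed.

Lemma nth_walk_x (T : Type) (a0 : T) (mid : seq T) (x0 : T) : nth a0 (a0 :: rcons mid x0) (size mid).+1 = x0.
Proof. by rewrite /= nth_rcons_sz. Qed.

Lemma zr_walk G Z a y h : zr G Z a y h ->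
  exists mid : seq V, [/\ path (adjacent G) a (rcons mid y),
    (forall i, 0 < i -> i < (size (a :: rcons mid y)).-1 ->
       cnd G Z (nth a (a :: rcons mid y) i.-1) (nth a (a :: rcons mid y) i)
         (nth a (a :: rcons mid y) i.+1)) & ((last a mid, y) \in G) = h].
Proof.
elim => [y0 ay|x h0 y0 _ [mid [pm cm lm]] xy cz].
  exists [::]; split => //=; first by rewrite ay.
  by case=> [|[|i]].
exists (rcons mid x); split.
- by rewrite rcons_path pm last_rcons.
- move=> i i0; set s := a :: rcons mid x.
  have -> : a :: rcons (rcons mid x) y0 = rcons s y0 by [].
  have ss : size s = (size mid).+2 by rewrite /s /= size_rcons.
  move=> isz; have {}isz : i < (size mid).+2 by move: isz; rewrite size_rcons ss.
  have [ilt|ige] := ltnP i (size mid).+1.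
    have l1 : i.-1 < size s by rewrite ss (leq_ltn_trans (leq_pred i)) // ltnS ltnW.
    have l2 : i < size s by rewrite ss ltnW.
    have l3 : i.+1 < size s by rewrite ss.
    rewrite (nth_rcons_lt _ _ l1) (nth_rcons_lt _ _ l2) (nth_rcons_lt _ _ l3).
    by apply: cm => //; rewrite ss.
  have ieq : i = (size mid).+1 by apply/eqP; rewrite eqn_leq -ltnS isz ige.
  subst i; have l1 : size mid < size s by rewrite ss.
  have l2 : (size mid).+1 < size s by rewrite ss.
  rewrite -[(size mid).+1.-1]/(size mid) -ss nth_rcons_sz (nth_rcons_lt _ _ l1) (nth_rcons_lt _ _ l2).
  rewrite nth_walk_last nth_walk_x.
  rewrite /cnd /collider lm; case: ifP => [/andP [hh yx]|].
    have xZ : x \in Z by rewrite -cz hh yx.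
    by exists x => //; exact: connect0.
  by move=> hf; rewrite -cz; apply/negP => /andP [hh yx]; move: hf; rewrite hh yx.
- by rewrite last_rcons.
Qed.

Lemma zr_conn G Z a b h : zr G Z a b h -> a != b -> d_connected G a b Z.
Proof.
move=> /zr_walk [mid [pm cm _]] ab; split => //; exists mid; by split.
Qed.

Lemma zr_detour G Z a x h : is_dag G -> zr G Z a x h -> x \notin Z ->
  (exists2 z, z \in Z & connect (edge_rel G) x z) -> zr G Z a x false.
Proof.
move=> dG zx xZ [z zZ /connectP [p pp zl]].
elim: p x h zx xZ pp zl => [|c p IH] x h zx xZ /=; first by move=> _ zx'; move: xZ; rewrite -zx' zZ.
move=> /andP [xc pp] zl; have {}xc : (x, c) \in G := xc.
have cx : (c, x) \notin G by apply: dag_no2.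
have zc : zr G Z a c true.
  have := zrS zx (_ : adjacent G x c); rewrite xc; apply; first by rewrite /adjacent xc.
  by rewrite (negbTE cx) andbF (negbTE xZ).
have adj : adjacent G c x by rewrite /adjacent xc orbT.
case: (boolP (c \in Z)) => cZ.
  by have := zrS zc adj; rewrite (negbTE cx); apply; rewrite xc cZ.
have zc' := IH c true zc cZ pp zl.
by have := zrS zc' adj; rewrite (negbTE cx); apply; rewrite (negbTE cZ).
Qed.

Lemma conn_zr G Z a b : is_dag G -> d_connected G a b Z -> exists h, zr G Z a b h.
Proof.
move=> dG [_ [mid [pm cm]]].
suff : zr G Z a b ((last a mid, b) \in G) by move=> H; exists ((last a mid, b) \in G).
elim/last_ind: mid b pm cm => [|m x IH] b.
  by rewrite /= andbT => ab _; exact: zr0.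
rewrite rcons_path last_rcons => /andP [pm xb] cm.
set s := a :: rcons m x.
have es : a :: rcons (rcons m x) b = rcons s b by [].
have ss : size s = (size m).+2 by rewrite /s /= size_rcons.
move: cm; rewrite es => cm.
have cm' : forall i, 0 < i -> i < (size m).+2 ->
    cnd G Z (nth a (rcons s b) i.-1) (nth a (rcons s b) i) (nth a (rcons s b) i.+1).
  by move=> i i0 il; apply: cm => //; rewrite size_rcons ss.
have zx : zr G Z a x ((last a m, x) \in G).
  apply: IH pm _ => i i0 il.
  have {}il : i < (size m).+1 by move: il; rewrite /= size_rcons.
  have l1 : i.-1 < size s by rewrite ss (leq_ltn_trans (leq_pred i)) // ltnS ltnW.
  have l2 : i < size s by rewrite ss ltnW.
  have l3 : i.+1 < size s by rewrite ss.
  have := cm' i i0 (ltn_trans il (ltnSn _)).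
  by rewrite (nth_rcons_lt _ _ l1) (nth_rcons_lt _ _ l2) (nth_rcons_lt _ _ l3).
have l1 : size m < size s by rewrite ss.
have l2 : (size m).+1 < size s by rewrite ss.
have := cm' (size m).+1 isT (ltnSn _).
rewrite -[(size m).+1.-1]/(size m) -ss nth_rcons_sz (nth_rcons_lt _ _ l1) (nth_rcons_lt _ _ l2).
rewrite nth_walk_last nth_walk_x.
rewrite /cnd /collider.
case: ifP => [/andP [h1 bx]|hf].
  case: (boolP (x \in Z)) => xZ Hd.
    by apply: zrS zx xb _; rewrite h1 bx xZ.
  have zx' := zr_detour dG zx xZ Hd.
  by apply: zrS zx' xb _; rewrite (negbTE xZ).
by move=> xZ; apply: zrS zx xb _; rewrite hf (negbTE xZ).
Qed.

Lemma loc_sep G x y : is_dag G -> x != y -> ~~ adjacent G x y ->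
  ~~ connect (edge_rel G) x y -> d_separated G x y [set p | (p, x) \in G].
Proof.
move=> dG xy nadj ncon dc.
case: (conn_zr dG dc) => h zy.
have inv : forall u h0, zr G [set p | (p, x) \in G] x u h0 ->
    (h0 = false /\ (u, x) \in G) \/ (h0 = true /\ connect (edge_rel G) x u).
  move=> u h0; elim => [y0 ay|x0 h1 y0 _ IH ady cz].
    case/orP: ay => [xy0|y0x].
      by right; rewrite xy0; split => //; exact: connect1.
    by left; rewrite (negbTE (dag_no2 dG y0x)).
  case: IH => [[hf ux]|[ht cxu]].
    by move: cz; rewrite hf inE ux.
  have x0Z : (x0, x) \notin G.
    by apply/negP => x0x; move: (dG _ _ x0x); rewrite cxu.
  move: cz; rewrite ht inE (negbTE x0Z) /= => yx0.
  have x0y : (x0, y0) \in G by case/orP: ady => //; rewrite yx0.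
  right; rewrite x0y; split => //; apply: connect_trans cxu (connect1 _); exact: x0y.
case: (inv _ _ zy) => [[_ yx]|[_ cxy]].
  by move: nadj; rewrite /adjacent yx orbT.
by move: ncon; rewrite cxy.
Qed.

Definition covered G (e : V * V) : Prop :=
  e \in G /\ forall z, z != e.1 -> ((z, e.2) \in G) = ((z, e.1) \in G).

Lemma conn2 G Z a m b : a != b -> adjacent G a m -> adjacent G m b ->
  ~~ collider G a m b -> m \notin Z -> d_connected G a b Z.
Proof.
move=> ab am mb nc mZ; split => //; exists [:: m]; split; first by rewrite /= am mb.
by case=> [|[|i]] //= _ _; rewrite (negbTE nc).
Qed.

Lemma memrev G (e : V * V) x y : ((x, y) \in reverse_edge G e) =
  (((x, y) != e) && ((x, y) \in G)) || ((x, y) == (e.2, e.1)).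
Proof. by rewrite /reverse_edge !inE. Qed.

Lemma memrev_other G a0 b0 x y : (x != a0) || (y != b0) -> (x != b0) || (y != a0) ->
  ((x, y) \in reverse_edge G (a0, b0)) = ((x, y) \in G).
Proof.
move=> h1 h2; rewrite memrev /= !xpair_eqE negb_and h1 /=.
by move: h2; rewrite -negb_and => /negbTE ->; rewrite orbF.
Qed.

Lemma me_refl G : markov_equiv G G.
Proof. by []. Qed.

Lemma me_sym G H : markov_equiv G H -> markov_equiv H G.
Proof. by move=> me a b Z ab aZ bZ; split => h; apply/(me a b Z ab aZ bZ). Qed.

Lemma me_trans G H K : markov_equiv G H -> markov_equiv H K -> markov_equiv G K.
Proof.
move=> m1 m2 a b Z ab aZ bZ; split => h.
  by apply/(m2 a b Z ab aZ bZ); apply/(m1 a b Z ab aZ bZ).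
by apply/(m1 a b Z ab aZ bZ); apply/(m2 a b Z ab aZ bZ).
Qed.

Lemma rev_covered G v w : is_dag G -> reversible G (v, w) -> covered G (v, w).
Proof.
move=> dG [vw [dG' me]]; split => // z /= zv.
set G' := reverse_edge G (v, w) in dG' me *.
have vNw : v != w by apply: contraTneq vw => ->; exact: dag_noloop.
have wvG : (w, v) \notin G := dag_no2 dG vw.
have wvG' : (w, v) \in G' by rewrite memrev /= eqxx orbT.
have vwG' : (v, w) \notin G'.
  by rewrite memrev /= eqxx /= !xpair_eqE (negbTE vNw).
case: (eqVneq z w) => [->|zw]; first by rewrite (negbTE (dag_noloop _ dG)) (negbTE wvG).
apply/idP/idP => [zwG|zvG].
- apply/negPn/negP => zvN.
  have vzN : (v, z) \notin G.
    apply/negP => vzG.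
    have vzG' : (v, z) \in G' by rewrite memrev_other ?eqxx ?zw ?vNw ?orbT.
    have zwG' : (z, w) \in G' by rewrite memrev_other ?zv ?zw.
    have : connect (edge_rel G') v w.
      by apply: connect_trans (connect1 (_ : edge_rel G' v z)) (connect1 (_ : edge_rel G' z w)).
    by move: (dG' _ _ wvG') => /negP.
  have zwG' : (z, w) \in G' by rewrite memrev_other ?zv ?zw.
  case: (boolP (connect (edge_rel G) z v)) => czv.
    have ncvz : ~~ connect (edge_rel G) v z.
      by apply/negP => cvz; move: (dag_cyc dG czv cvz) => e; rewrite e eqxx in zv.
    have vz : v != z by rewrite eq_sym.
    have nadj : ~~ adjacent G v z by rewrite /adjacent negb_or vzN.
    have sep := loc_sep dG vz nadj ncvz.
    have := (me v z [set p | (p, v) \in G] vz _ _).1 sep; apply.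
    + by rewrite inE dag_noloop.
    + by rewrite inE.
    apply: (conn2 (m := w)) => //.
    + by rewrite /adjacent wvG' orbT.
    + by rewrite /adjacent zwG' orbT.
    + by rewrite /collider (negbTE vwG').
    + by rewrite inE.
  have nadj : ~~ adjacent G z v by rewrite /adjacent negb_or zvN.
  have sep := loc_sep dG zv nadj czv.
  have := (me z v [set p | (p, z) \in G] zv _ _).1 sep; apply.
  + by rewrite inE dag_noloop.
  + by rewrite inE.
  apply: (conn2 (m := w)) => //.
  + by rewrite /adjacent zwG'.
  + by rewrite /adjacent wvG'.
  + by rewrite /collider (negbTE vwG') andbF.
  + by rewrite inE (dag_no2 dG zwG).
- apply/negPn/negP => zwN.
  have wzN : (w, z) \notin G.
    apply/negP => wzG.
    have : connect (edge_rel G) z w.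
      by apply: connect_trans (connect1 (_ : edge_rel G z v)) (connect1 (_ : edge_rel G v w)).
    by move: (dG _ _ wzG) => /negP.
  have zwG' : (z, w) \in G' = false by rewrite memrev_other ?zv ?zw // (negbTE zwN).
  have wzG' : (w, z) \in G' = false.
    have c1 : (w != v) || (z != w) by rewrite eq_sym vNw.
    have c2 : (w != w) || (z != v) by rewrite zv orbT.
    by rewrite (memrev_other _ c1 c2) (negbTE wzN).
  have vzG' : (v, z) \in G' = false.
    by rewrite memrev_other ?zw ?vNw ?orbT // (negbTE (dag_no2 dG zvG)).
  case: (boolP (connect (edge_rel G') z w)) => czw.
    have ncwz : ~~ connect (edge_rel G') w z.
      by apply/negP => cwz; move: (dag_cyc dG' czw cwz) => e; rewrite e eqxx in zw.
    have wz : w != z by rewrite eq_sym.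
    have nadj : ~~ adjacent G' w z by rewrite /adjacent wzG' zwG'.
    have sep := loc_sep dG' wz nadj ncwz.
    have := (me w z [set p | (p, w) \in G'] wz _ _).2 sep; apply.
    + by rewrite inE dag_noloop.
    + by rewrite inE zwG'.
    apply: (conn2 (m := v)) => //.
    + by rewrite /adjacent vw orbT.
    + by rewrite /adjacent zvG orbT.
    + by rewrite /collider (negbTE wvG).
    + by rewrite inE.
  have nadj : ~~ adjacent G' z w by rewrite /adjacent wzG' zwG'.
  have sep := loc_sep dG' zw nadj czw.
  have := (me z w [set p | (p, z) \in G'] zw _ _).2 sep; apply.
  + by rewrite inE dag_noloop.
  + by rewrite inE wzG'.
  apply: (conn2 (m := v)) => //.
  + by rewrite /adjacent zvG.
  + by rewrite /adjacent vw.
  + by rewrite /collider (negbTE wvG) andbF.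
  + by rewrite inE vzG'.
Qed.

End Gen.


(* abstract four-state block automaton *)
Definition gst (zv zw : bool) : rel (bool*bool) := fun s t =>
  match s, t with
  | (false, _), (true, true) => ~~ zv
  | (true, h), (false, false) => h == zw
  | _, _ => false end.
Definition gst' (zv zw : bool) : rel (bool*bool) := fun s t =>
  match s, t with
  | (false, h), (true, false) => h == zv
  | (true, _), (false, true) => ~~ zw
  | _, _ => false end.
Definition need (zv zw : bool) (t : bool*bool) (k : nat) : bool :=
  match t with
  | (false, h) => match k with 0 => h == zv | 1 => ~~ zv | 3 => true | _ => false end
  | (true, h) => match k with 0 => h == zw | 2 => ~~ zw | 4 => true | _ => false end end.
Definition allst : seq (bool*bool) := [:: (false,false); (false,true); (true,false); (true,true)].
Definition nx (r : rel (bool*bool)) s := filter (r s) allst.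
Definition cl r s := s :: nx r s ++ flatten (map (nx r) (nx r s)) ++
  flatten (map (nx r) (flatten (map (nx r) (nx r s)))).
Definition cneed r zv zw s k := has (fun t => need zv zw t k) (cl r s).

Lemma P1g zv zw s t k : gst zv zw s t -> cneed (gst zv zw) zv zw t k -> cneed (gst zv zw) zv zw s k.
Proof. by case: zv zw s t => [] [] [[] []] [[] []]; case: k => [|[|[|[|[|k]]]]]. Qed.
Lemma C1 zv zw k h : cneed (gst zv zw) zv zw (h, true) k ->
   cneed (gst' zv zw) zv zw (false,true) k || cneed (gst' zv zw) zv zw (true,true) k.
Proof. by case: zv zw h => [] [] []; case: k => [|[|[|[|[|k]]]]]. Qed.
Lemma C2 zv zw k : cneed (gst zv zw) zv zw (false, false) k -> cneed (gst' zv zw) zv zw (false,false) k.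
Proof. by case: zv zw => [] []; case: k => [|[|[|[|[|k]]]]]. Qed.
Lemma C3 zv zw k : cneed (gst zv zw) zv zw (true, false) k -> cneed (gst' zv zw) zv zw (true,false) k.
Proof. by case: zv zw => [] []; case: k => [|[|[|[|[|k]]]]]. Qed.
Lemma C4 zv zw k : cneed (gst zv zw) zv zw (true, true) k ->
  [|| k == 0, k == 1, k == 3 | cneed (gst' zv zw) zv zw (true,false) k].
Proof. by case: zv zw => [] []; case: k => [|[|[|[|[|k]]]]]. Qed.
Lemma C5 zv zw k : cneed (gst zv zw) zv zw (false, false) k ->
  [|| k == 0, k == 2, k == 4 | cneed (gst' zv zw) zv zw (false,true) k].
Proof. by case: zv zw => [] []; case: k => [|[|[|[|[|k]]]]]. Qed.

Lemma cneed_refl r zv zw s k : need zv zw s k -> cneed r zv zw s k.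
Proof. by rewrite /cneed /cl /= => ->. Qed.

Lemma cl_closed (r : rel (bool*bool)) (Q : bool*bool -> Prop) :
  (forall s t, Q s -> r s t -> Q t) -> forall s, Q s -> forall t, t \in cl r s -> Q t.
Proof.
move=> cQ s Qs t; rewrite /cl inE => /orP [/eqP -> //|].
have nxQ : forall s0 t0, Q s0 -> t0 \in nx r s0 -> Q t0.
  by move=> s0 t0 Q0; rewrite mem_filter => /andP [rs _]; exact: cQ Q0 rs.
rewrite !mem_cat => /orP [|/orP []].
- exact: nxQ.
- by case/flatten_mapP => s1 s1in tin; exact: (nxQ s1 t (nxQ s s1 Qs s1in) tin).
case/flatten_mapP => s2 /flatten_mapP [s1 s1in s2in] tin.
exact: (nxQ s2 t (nxQ s1 s2 (nxQ s s1 Qs s1in) s2in) tin).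
Qed.


Section RevDag.
Variable V : finType.
Variables (G : {set V * V}) (v w : V).
Hypothesis dG : is_dag G.
Hypothesis vw : (v, w) \in G.
Hypothesis cov : forall z, z != v -> ((z, w) \in G) = ((z, v) \in G).

Let G' := reverse_edge G (v, w).
Let Gm := G :\ (v, w).

Lemma vNw : v != w.
Proof. by apply: contraTneq vw => ->; exact: dag_noloop. Qed.

Lemma Gm_sub x y : connect (edge_rel Gm) x y -> connect (edge_rel G) x y.
Proof.
apply: connect_sub => a0 b0; rewrite /edge_rel /Gm in_setD1 => /andP [_ h].
exact: connect1.
Qed.

Lemma revpath p x : path (edge_rel G') x p ->
  connect (edge_rel Gm) x (last x p) \/ (x = w /\ connect (edge_rel Gm) v (last x p)).
Proof.
elim: p x => [|c p IH] x /=; first by left; exact: connect0.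
move=> /andP [xc pp]; have {}xc : (x, c) \in G' := xc.
move: xc; rewrite /G' memrev /= => /orP [/andP [ne xc]|].
  have xcm : (x, c) \in Gm by rewrite /Gm in_setD1 ne xc.
  case: (IH _ pp) => [h|[cw h]].
    by left; apply: connect_trans (connect1 _) h; exact: xcm.
  subst c; have xv : x != v by apply: contraNneq ne => ->.
  have xvG : (x, v) \in G by rewrite -cov.
  have xvm : (x, v) \in Gm.
    by rewrite /Gm in_setD1 xvG andbT xpair_eqE negb_and xv.
  by left; apply: connect_trans (connect1 _) h; exact: xvm.
rewrite xpair_eqE => /andP [/eqP xw /eqP cv]; subst x c.
case: (IH _ pp) => [h|[e _]]; first by right.
by move: vNw; rewrite e eqxx.
Qed.

Lemma rev_dag : is_dag G'.
Proof.
move=> x y xy; apply/negP => cyx.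
have wvG : (w, v) \notin G := dag_no2 dG vw.
move: xy; rewrite /G' memrev /= => /orP [/andP [ne xyG]|].
  case/connectP: cyx => p pp ep; case: (revpath pp) => [cyx|[yw cvx]].
    by rewrite -ep in cyx; move: (@dG _ _ xyG); rewrite (Gm_sub cyx).
  rewrite -ep in cvx; subst y.
  have xv : x != v by apply: contraNneq ne => ->.
  have xvG : (x, v) \in G by rewrite -cov.
  by move: (@dG _ _ xvG); rewrite (Gm_sub cvx).
rewrite xpair_eqE => /andP [/eqP xw /eqP yv]; subst x y.
case/connectP: cyx => p pp ep; case: (revpath pp) => [cvw|[e _]]; last first.
  by move: vNw; rewrite e eqxx.
rewrite -ep in cvw; case: (connect_last cvw vNw) => c cvc cw.
have {}cw : (c, w) \in Gm := cw.
move: cw; rewrite /Gm in_setD1 xpair_eqE => /andP [ne cwG].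
have cv : c != v by apply/negP => /eqP e; move: ne; rewrite e !eqxx.
have cvG : (c, v) \in G by rewrite -cov.
by move: (@dG _ _ cvG); rewrite (Gm_sub cvc).
Qed.

End RevDag.

Section Sim.
Variable V : finType.
Variables (G : {set V * V}) (v w : V) (Z : {set V}) (a : V).
Hypothesis dG : is_dag G.
Hypothesis vw : (v, w) \in G.
Hypothesis cov : forall z, z != v -> ((z, w) \in G) = ((z, v) \in G).

Let G' := reverse_edge G (v, w).
Let zv := v \in Z.
Let zw := w \in Z.
Let R' y h := zr G' Z a y h.

Let vNw : v != w := vNw dG vw.
Let wvG : (w, v) \notin G := dag_no2 dG vw.
Let wvG' : (w, v) \in G'.
Proof. by rewrite /G' memrev /= eqxx orbT. Qed.
Let vwG' : (v, w) \in G' = false.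
Proof. by rewrite /G' memrev /= eqxx /= !xpair_eqE (negbTE vNw). Qed.

Lemma out1 x y : y != v -> y != w -> ((x, y) \in G') = ((x, y) \in G).
Proof. by move=> yv yw; rewrite /G' memrev_other // ?yw ?yv orbT. Qed.
Lemma out2 x y : x != v -> x != w -> ((x, y) \in G') = ((x, y) \in G).
Proof. by move=> xv xw; rewrite /G' memrev_other // ?xw ?xv. Qed.
Lemma adj1 x y : y != v -> y != w -> adjacent G' x y = adjacent G x y.
Proof. by move=> yv yw; rewrite /adjacent (out1 x yv yw) (out2 x yv yw). Qed.
Lemma adj2 x y : x != v -> x != w -> adjacent G' x y = adjacent G x y.
Proof. by move=> xv xw; rewrite /adjacent (out1 y xv xw) (out2 y xv xw). Qed.

Lemma zr0' y h : adjacent G' a y -> ((a, y) \in G') = h -> R' y h.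
Proof. by move=> ay <-; exact: zr0. Qed.
Lemma zrS' x h y h' : R' x h -> adjacent G' x y -> (h && ((y, x) \in G')) = (x \in Z) ->
  ((x, y) \in G') = h' -> R' y h'.
Proof. by move=> zx xy c <-; exact: zrS zx xy c. Qed.

Lemma par_out p : (p, v) \in G -> (p != v) && (p != w).
Proof.
move=> pv; apply/andP; split; apply/negP => /eqP e; subst p.
  by move: pv; rewrite (negbTE (dag_noloop _ dG)).
by move: pv; rewrite (negbTE wvG).
Qed.

Definition Atom (k : nat) : Prop :=
  match k with
  | 0 => forall p, (p, v) \in G -> R' p false
  | 1 => forall c, (v, c) \in G -> c != w -> R' c true
  | 2 => forall d, (w, d) \in G -> R' d true
  | 3 => (exists h, R' v h) \/ v = a
  | 4 => (exists h, R' w h) \/ w = a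
  | _ => True end.

Definition J s := forall k, cneed (gst zv zw) zv zw s k -> Atom k.
Definition node (s : bool * bool) := if s.1 then w else v.
Definition Q s := R' (node s) s.2.

Lemma gs_move s t : Q s -> gst' zv zw s t -> Q t.
Proof.
case: s t => [[] h] [[] []] //=; rewrite /Q /node /=.
  move=> zs nzw; apply: zrS' zs _ _ _.
  - by rewrite /adjacent vwG' wvG'.
  - by rewrite vwG' andbF; apply/esym/negbTE.
  - by rewrite wvG'.
move=> zs /eqP hv; apply: zrS' zs _ _ _.
- by rewrite /adjacent wvG' orbT.
- by rewrite wvG' andbT.
- by rewrite vwG'.
Qed.

Lemma exitQ t k : Q t -> need zv zw t k -> Atom k.
Proof.
case: t => [[] h]; rewrite /Q /node /=.
- case: k => [|[|[|[|[|k]]]]] //= zs.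
  + move=> /eqP hw p pv; case/andP: (par_out pv) => p1 p2.
    have pw : (p, w) \in G by rewrite cov.
    apply: zrS' zs _ _ _.
    * by rewrite /adjacent (out2 _ p1 p2) pw orbT.
    * by rewrite (out2 _ p1 p2) pw andbT.
    * by rewrite (out1 _ p1 p2) (negbTE (dag_no2 dG pw)).
  + move=> nzw d wd.
    have d1 : d != v by apply/negP => /eqP e; move: wd; rewrite e (negbTE wvG).
    have d2 : d != w by apply/negP => /eqP e; move: wd; rewrite e (negbTE (dag_noloop _ dG)).
    apply: zrS' zs _ _ _.
    * by rewrite /adjacent (out1 _ d1 d2) wd.
    * by rewrite (out2 _ d1 d2) (negbTE (dag_no2 dG wd)) andbF; apply/esym/negbTE.
    * by rewrite (out1 _ d1 d2) wd.
  + by move=> _; left; exists h.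
- case: k => [|[|[|[|[|k]]]]] //= zs.
  + move=> /eqP hv p pv; case/andP: (par_out pv) => p1 p2.
    apply: zrS' zs _ _ _.
    * by rewrite /adjacent (out2 _ p1 p2) pv orbT.
    * by rewrite (out2 _ p1 p2) pv andbT.
    * by rewrite (out1 _ p1 p2) (negbTE (dag_no2 dG pv)).
  + move=> nzv c vc cw.
    have c1 : c != v by apply/negP => /eqP e; move: vc; rewrite e (negbTE (dag_noloop _ dG)).
    apply: zrS' zs _ _ _.
    * by rewrite /adjacent (out1 _ c1 cw) vc.
    * by rewrite (out2 _ c1 cw) (negbTE (dag_no2 dG vc)) andbF; apply/esym/negbTE.
    * by rewrite (out1 _ c1 cw) vc.
  + by move=> _; left; exists h.
Qed.

Lemma GS s k : Q s -> cneed (gst' zv zw) zv zw s k -> Atom k.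
Proof.
move=> Qs /hasP [t tin nt]; apply: (exitQ (t := t)) nt.
exact: (cl_closed gs_move Qs tin).
Qed.

Definition inb x := (x == v) || (x == w).

Lemma inbv : inb v. Proof. by rewrite /inb eqxx. Qed.
Lemma inbw : inb w. Proof. by rewrite /inb eqxx orbT. Qed.

Lemma gmove x h0 y : inb x -> inb y -> adjacent G x y ->
  (h0 && ((y, x) \in G)) = (x \in Z) -> gst zv zw (x == w, h0) (y == w, (x, y) \in G).
Proof.
case/orP => /eqP ->; case/orP => /eqP ->.
- by rewrite /adjacent (negbTE (dag_noloop _ dG)).
- by rewrite eqxx (negbTE vNw) vw (negbTE wvG) andbF /= => _ zf; rewrite /zv -zf.
- by rewrite eqxx (negbTE vNw) (negbTE wvG) vw andbT /= => _ ->.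
- by rewrite /adjacent (negbTE (dag_noloop _ dG)).
Qed.

Lemma exitG x h0 y : J (x == w, h0) -> inb x -> ~~ inb y -> adjacent G x y ->
  (h0 && ((y, x) \in G)) = (x \in Z) -> R' y ((x, y) \in G).
Proof.
move=> Jx /orP [] /eqP ex; subst x; rewrite /inb negb_or => /andP [y1 y2] ady cz.
- rewrite (negbTE vNw) in Jx.
  case: (boolP ((y, v) \in G)) => yv.
    rewrite yv andbT in cz.
    have Hn : need zv zw (false, h0) 0 by rewrite /= cz.
    move: (Jx 0 (cneed_refl _ Hn)) => /= A.
    by rewrite (negbTE (dag_no2 dG yv)); apply: A.
  have vy : (v, y) \in G by move: ady; rewrite /adjacent (negbTE yv) orbF.
  rewrite (negbTE yv) andbF in cz.
  have Hn : need zv zw (false, h0) 1 by rewrite /= /zv -cz.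
  move: (Jx 1 (cneed_refl _ Hn)) => /= A.
  by rewrite vy; apply: A.
- rewrite eqxx in Jx.
  case: (boolP ((y, w) \in G)) => yw.
    rewrite yw andbT in cz.
    have Hn : need zv zw (true, h0) 0 by rewrite /= cz.
    move: (Jx 0 (cneed_refl _ Hn)) => /= A.
    by rewrite (negbTE (dag_no2 dG yw)); apply: A; rewrite -cov.
  have wy : (w, y) \in G by move: ady; rewrite /adjacent (negbTE yw) orbF.
  rewrite (negbTE yw) andbF in cz.
  have Hn : need zv zw (true, h0) 2 by rewrite /= /zw -cz.
  move: (Jx 2 (cneed_refl _ Hn)) => /= A.
  by rewrite wy; apply: A.
Qed.

Lemma vwx x : x != v -> adjacent G x v -> adjacent G x w -> ((v, x) \in G) = ((w, x) \in G).
Proof.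
move=> xv av aw; apply/idP/idP => h.
  case/orP: aw => // xw; have xvG : (x, v) \in G by rewrite -cov.
  by move: (dag_no2 dG h); rewrite xvG.
case/orP: av => // xvG; have xw : (x, w) \in G by rewrite cov.
by move: (dag_no2 dG h); rewrite xw.
Qed.

Lemma consis x y0 y1 : x != v -> inb y0 -> inb y1 -> adjacent G x y0 -> adjacent G x y1 ->
  ((y1, x) \in G) = ((y0, x) \in G).
Proof.
move=> xv; case/orP => /eqP ->; case/orP => /eqP -> // a0 a1.
  by rewrite (vwx xv a0 a1).
by rewrite (vwx xv a1 a0).
Qed.

Lemma entry u y : u != v -> u != w ->
  (forall y1, inb y1 -> adjacent G u y1 -> R' y1 ((u, y1) \in G)) ->
  inb y -> adjacent G u y -> J (y == w, (u, y) \in G).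
Proof.
move=> u1 u2 E iy uy.
case: (boolP ((u, v) \in G)) => uv.
  have uw : (u, w) \in G by rewrite cov.
  have Rv : R' v true by have := E v inbv; rewrite /adjacent uv; apply.
  have Rw : R' w true by have := E w inbw; rewrite /adjacent uw; apply.
  have -> : (u, y) \in G by case/orP: iy => /eqP ->.
  move=> k /C1 /orP [] H; first exact: (GS (s := (false, true)) Rv H).
  exact: (GS (s := (true, true)) Rw H).
have uw : ((u, w) \in G) = false by rewrite cov // (negbTE uv).
case/orP: iy => /eqP ey; subst y.
  have Rv : R' v false by have := E v inbv uy; rewrite (negbTE uv).
  rewrite (negbTE uv) (negbTE vNw) => k /C2 H.
  exact: (GS (s := (false, false)) Rv H).
have Rw : R' w false by have := E w inbw uy; rewrite uw.
rewrite uw eqxx => k /C3 H.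
exact: (GS (s := (true, false)) Rw H).
Qed.

Lemma startv : a = v -> J (true, true).
Proof.
move=> av k /C4 /or4P [/eqP ->|/eqP ->|/eqP ->|H] /=.
- move=> p pv; case/andP: (par_out pv) => p1 p2; apply: zr0'.
    by rewrite av (adj1 _ p1 p2) /adjacent pv orbT.
  by rewrite av (out1 _ p1 p2) (negbTE (dag_no2 dG pv)).
- move=> c vc cw.
  have c1 : c != v by apply/negP => /eqP e; move: vc; rewrite e (negbTE (dag_noloop _ dG)).
  apply: zr0'; first by rewrite av (adj1 _ c1 cw) /adjacent vc.
  by rewrite av (out1 _ c1 cw) vc.
- by right.
have Rw : R' w false by apply: zr0'; rewrite av ?vwG' // /adjacent vwG' wvG' orbT.
exact: (GS (s := (true, false)) Rw H).
Qed.

Lemma startw : a = w -> J (false, false).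
Proof.
move=> aw k /C5 /or4P [/eqP ->|/eqP ->|/eqP ->|H] /=.
- move=> p pv; case/andP: (par_out pv) => p1 p2.
  have pw : (p, w) \in G by rewrite cov.
  apply: zr0'; first by rewrite aw (adj1 _ p1 p2) /adjacent pw orbT.
  by rewrite aw (out1 _ p1 p2) (negbTE (dag_no2 dG pw)).
- move=> d wd.
  have d1 : d != v by apply/negP => /eqP e; move: wd; rewrite e (negbTE wvG).
  have d2 : d != w by apply/negP => /eqP e; move: wd; rewrite e (negbTE (dag_noloop _ dG)).
  apply: zr0'; first by rewrite aw (adj1 _ d1 d2) /adjacent wd.
  by rewrite aw (out1 _ d1 d2) wd.
- by right.
have Rv : R' v true by apply: zr0'; rewrite aw ?wvG' // /adjacent wvG'.
exact: (GS (s := (false, true)) Rv H).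
Qed.

Lemma sim y h : zr G Z a y h -> if inb y then J (y == w, h) else R' y h.
Proof.
elim => [y0 ay | x h0 y0 zx IH ady cz].
- case: (boolP (inb y0)) => iy.
    case: (boolP (inb a)) => ia.
      case/orP: ia => /eqP ea; case/orP: iy => /eqP ey; subst y0.
      + by move: ay; rewrite ea /adjacent (negbTE (dag_noloop _ dG)).
      + by rewrite ea vw eqxx; exact: startv.
      + by rewrite ea (negbTE wvG) (negbTE vNw); exact: startw.
      + by move: ay; rewrite ea /adjacent (negbTE (dag_noloop _ dG)).
    move: ia; rewrite /inb negb_or => /andP [a1 a2].
    apply: entry => // y1 _ ay1; apply: zr0'; first by rewrite (adj2 _ a1 a2).
    by rewrite (out2 _ a1 a2).
  move: iy; rewrite /inb negb_or => /andP [y1 y2].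
  by apply: zr0'; rewrite ?(adj1 _ y1 y2) ?(out1 _ y1 y2).
- case: (boolP (inb x)) => ix; [rewrite ix in IH | rewrite (negbTE ix) in IH]; case: (boolP (inb y0)) => iy.
  + by move=> k Hk; apply: IH; exact: P1g (gmove ix iy ady cz) Hk.
  + exact: exitG IH ix iy ady cz.
  + move: ix; rewrite /inb negb_or => /andP [x1 x2].
    apply: entry => // y1 iy1 ay1; apply: zrS' IH _ _ _.
    * by rewrite (adj2 _ x1 x2).
    * by rewrite (out1 _ x1 x2) (consis x1 iy iy1 ady ay1).
    * by rewrite (out2 _ x1 x2).
  + move: ix iy; rewrite /inb !negb_or => /andP [x1 x2] /andP [y1 y2].
    apply: zrS' IH _ _ _.
    * by rewrite (adj2 _ x1 x2).
    * by rewrite (out1 _ x1 x2).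
    * by rewrite (out2 _ x1 x2).
Qed.

Lemma sim_conn b : d_connected G a b Z -> d_connected G' a b Z.
Proof.
move=> dc; have ab := dc.1; case: (conn_zr dG dc) => h zb.
have := sim zb; case: (boolP (inb b)) => ib.
  case/orP: ib => /eqP eb; rewrite eb in ab *.
    rewrite (negbTE vNw) => Jb.
    move: (Jb 3 (@cneed_refl _ _ _ (false, h) 3 isT)) => /= [[h' z'] | e].
      exact: zr_conn z' ab.
    by rewrite e eqxx in ab.
  rewrite eqxx => Jb.
  move: (Jb 4 (@cneed_refl _ _ _ (true, h) 4 isT)) => /= [[h' z'] | e].
    exact: zr_conn z' ab.
  by rewrite e eqxx in ab.
by move=> z'; exact: zr_conn z' ab.
Qed.

End Sim.


Section Final.
Variable V : finType.
Implicit Types (G H : {set V * V}).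

Lemma cov_rev G v w : is_dag G -> covered G (v, w) ->
  is_dag (reverse_edge G (v, w)) /\ markov_equiv G (reverse_edge G (v, w)).
Proof.
move=> dG [vw cov]; rewrite /= in cov.
set G' := reverse_edge G (v, w).
have dG' : is_dag G' := rev_dag dG vw cov.
have vNw := vNw dG vw.
have wvG := dag_no2 dG vw.
have wvG' : (w, v) \in G' by rewrite /G' memrev /= eqxx orbT.
have back : reverse_edge G' (w, v) = G.
  apply/setP => -[x y]; rewrite memrev /G' memrev /=.
  case: (eqVneq (x, y) (v, w)) => [[-> ->]|n1].
    by rewrite vw orbT.
  case: (eqVneq (x, y) (w, v)) => [[-> ->]|n2].
    by rewrite /= (negbTE wvG).
  by rewrite /= !orbF.
have cov' : forall z, z != w -> ((z, v) \in G') = ((z, w) \in G').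
  move=> z zw; case: (eqVneq z v) => [->|zv].
    rewrite /G' !memrev /= !xpair_eqE !eqxx /=.
    by rewrite (negbTE (dag_noloop _ dG)) (negbTE vNw) andbF.
  have c1 : (z != v) || (v != w) by rewrite zv.
  have c2 : (z != w) || (v != v) by rewrite zw.
  have c3 : (z != v) || (w != w) by rewrite zv.
  have c4 : (z != w) || (w != v) by rewrite zw.
  by rewrite /G' (memrev_other _ c1 c2) (memrev_other _ c3 c4) cov.
split => // a b Z ab aZ bZ; split => sep dc.
  by apply: sep; have := @sim_conn V G' w v Z a dG' wvG' cov' b dc; rewrite back.
by apply: sep; exact: (@sim_conn V G v w Z a dG vw cov b dc).
Qed.

Definition revT G (T : {set V * V}) : {set V * V} :=
  [set e | ((e \in G) && (e \notin T)) || ((e.2, e.1) \in T)].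

Lemma revT_ind G (S : {set V * V}) : is_dag G -> S \subset G ->
  (forall e, e \in S -> covered G e) -> is_matching S ->
  forall n (T : {set V * V}), #|T| = n -> T \subset S ->
  [/\ is_dag (revT G T), markov_equiv G (revT G T) &
      forall e, e \in S -> e \notin T -> covered (revT G T) e].
Proof.
move=> dG SG covS mS; elim => [|n IH] T cT TS.
  have -> : T = set0 by apply/eqP; rewrite -cards_eq0 cT.
  have -> : revT G set0 = G by apply/setP => e; rewrite /revT !inE andbT orbF.
  by split => // e eS _; exact: covS.
have : T != set0 by rewrite -card_gt0 cT.
case/set0Pn => f fT.
have fS : f \in S := subsetP TS f fT.
pose T0 := T :\ f.
have cT0 : #|T0| = n by move: cT; rewrite (cardsD1 f T) fT => -[].
have T0S : T0 \subset S := subset_trans (subD1set T f) TS.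
have fT0 : f \notin T0 by rewrite /T0 setD11.
have mT : forall e, (e \in T) = (e == f) || (e \in T0).
  by move=> e; rewrite /T0 in_setD1; case: (eqVneq e f) => [->|].
case: (IH T0 cT0 T0S) => dT0 meT0 covT0.
clearbody T0.
case: f fT fS fT0 mT => f1 f2 fT fS fT0 mT.
have cf := covT0 _ fS fT0.
case: (cov_rev dT0 cf) => dR meR.
have fG : (f1, f2) \in G := subsetP SG _ fS.
have f12 : f1 != f2 by apply: contraTneq fG => ->; exact: dag_noloop.
have f21 : (f2, f1) \notin T0.
  apply/negP => /(subsetP T0S) /(subsetP SG) h.
  by move: (dag_no2 dG fG); rewrite h.
have eqR : reverse_edge (revT G T0) (f1, f2) = revT G T.
  apply/setP => -[x y]; rewrite memrev /revT !in_set /= !mT.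
  case: (eqVneq (x, y) (f1, f2)) => [[-> ->]|n1].
    by rewrite (negbTE f21) !xpair_eqE (negbTE f12) eq_sym (negbTE f12) /= !andbF.
  case: (eqVneq (x, y) (f2, f1)) => [[-> ->]|n2].
    by rewrite eqxx !orbT.
  have n3 : (y, x) != (f1, f2) by apply: contraNneq n2 => -[-> ->].
  by rewrite (negbTE n3) /= !orbF.
rewrite -eqR; split => //; first exact: me_trans meT0 meR.
move=> [c d] gS gT.
have gT0 : (c, d) \notin T0 by rewrite mT negb_or in gT; case/andP: gT.
have gf : (c, d) != (f1, f2) by rewrite mT negb_or in gT; case/andP: gT.
case: (mS _ _ gS fS gf) => /= h1 h2 h3 h4.
case: (covT0 _ gS gT0) => cdin ccov; split.
  by rewrite memrev_other // ?h1 ?h2.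
move=> z /= zc.
have c1 : (z != f1) || (d != f2) by rewrite h4 orbT.
have c2 : (z != f2) || (d != f1) by rewrite h3 orbT.
have c3 : (z != f1) || (c != f2) by rewrite h2 orbT.
have c4 : (z != f2) || (c != f1) by rewrite h1 orbT.
by rewrite (memrev_other _ c1 c2) (memrev_other _ c3 c4); exact: ccov.
Qed.

End Final.

Unset Implicit Arguments.
Set Strict Implicit.

Theorem mainTheorem4 (V : finType) (G S : {set V * V}) :
  is_dag G ->
  S \subset G ->
  (forall e, e \in S -> reversible G e) ->
  is_matching S ->
  2 ^ #|S| <= #|MEC G|.
Proof.
move=> dG SG rev mS.
have covS : forall e, e \in S -> covered G e.
  by move=> [x y] eS; apply: rev_covered dG (rev _ eS).
have claim : forall T : {set V * V}, T \subset S -> revT G T \in MEC G.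
  move=> T TS; case: (revT_ind dG SG covS mS (erefl #|T|) TS) => d m _.
  by rewrite inE; apply: asboolT.
have inj : {in powerset S &, injective (revT G)}.
  move=> T1 T2; rewrite !inE => T1S T2S eq; apply/setP => e.
  case: (boolP (e \in S)) => eS; last first.
    by rewrite (negbTE (contraNN (subsetP T1S e) eS)) (negbTE (contraNN (subsetP T2S e) eS)).
  have key : forall T : {set V * V}, T \subset S -> (e \in revT G T) = (e \notin T).
    move=> T TS'; rewrite /revT in_set (subsetP SG e eS) /=.
    have -> : (e.2, e.1) \in T = false.
      apply/negP => /(subsetP TS') /(subsetP SG) h.
      case: e eS h => x y eS h.
      by move: (dag_no2 dG (subsetP SG _ eS)); rewrite h.
    by rewrite orbF.
  by rewrite -[e \in T1]negbK -[e \in T2]negbK -(key T1) // -(key T2) // eq.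
rewrite -(card_powerset S) -(card_in_imset inj).
apply: subset_leq_card; apply/subsetP => H /imsetP [T TS ->].
by rewrite inE in TS; exact: claim.
Qed.
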